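(* Let $n>1$ and $k\ge1$. Let $\mathcal{B}$ be a special $n$-Brinkhuis $k$-triple, and suppose some word of $\mathcal{B}^{(0)}$ begins with the letters $01$. Then $n\ge 13$, and exactly one of the following alternatives holds: <ul> <li>every word in $\mathcal{B}^{(0)}$ begins with $012021$ and ends with $120210$;</li> <li>every word in $\mathcal{B}^{(0)}$ begins with $012102$ and ends with $201210$.</li> </ul>
   Context: Let $\Sigma=\{0,1,2\}$. A word over $\Sigma$ is square-free if it cannot be written as $xyyz$ with $y$ nonempty. $\mathcal{A}(n)$ is the set of square-free words of length $n$. For a word $w$, $\bar w$ denotes its reversal. $\tau$ is the letter permutation $0\mapsto1$, $1\mapsto2$, $2\mapsto0$, applied letterwise to words and elementwise to sets of words. An $n$-Brinkhuis $(k_0,k_1,k_2)$-triple consists of sets $\mathcal{B}^{(i)}\subset\mathcal{A}(n)$, $i\in\{0,1,2\}$, where $\mathcal{B}^{(i)}$ has $k_i\ge1$ distinct words. The defining condition: for every square-free word $ii'i''\in\mathcal{A}(3)$ and all $u\in\mathcal{B}^{(i)}$, $v\in\mathcal{B}^{(i')}$, $x\in\mathcal{B}^{(i'')}$, the concatenation $uvx$ is square-free. A special $n$-Brinkhuis $k$-triple is an $n$-Brinkhuis $(k,k,k)$-triple satisfying two further conditions: <ul> <li>$\mathcal{B}^{(1)}=\tau(\mathcal{B}^{(0)})$ and $\mathcal{B}^{(2)}=\tau^2(\mathcal{B}^{(0)})$;</li> <li>$w\in\mathcal{B}^{(0)}$ implies $\bar w\in\mathcal{B}^{(0)}$.</li>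 </ul> *)

(* Defs.v *)
From mathcomp Require Import all_boot.
Set Implicit Arguments. Unset Strict Implicit. Unset Printing Implicit Defensive.

(* The alphabet Sigma = {0,1,2} is 'I_3; a word is a seq 'I_3,
   a word of length n is an n.-tuple 'I_3. *)
Notation letter := 'I_3.

Definition square_free (T : eqType) (w : seq T) : Prop :=
  ~ exists x y z : seq T, y <> [::] /\ w = x ++ y ++ y ++ z.

Definition tau (c : letter) : letter := ordS c.

Definition tau_word (n : nat) (w : n.-tuple letter) : n.-tuple letter :=
  map_tuple tau w.

Definition tau_set (n : nat) (B : {set n.-tuple letter}) : {set n.-tuple letter} :=
  [set tau_word w | w in B].

Definition brinkhuis_triple (n : nat) (k : letter -> nat)
    (B : letter -> {set n.-tuple letter}) : Prop :=
  (forall i, #|B i| = k i /\ 1 <= k i) /\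
  (forall i (w : n.-tuple letter), w \in B i -> square_free (tval w)) /\
  (forall i i' i'' : letter, square_free [:: i; i'; i''] ->
     forall u v x : n.-tuple letter, u \in B i -> v \in B i' -> x \in B i'' ->
       square_free (tval u ++ tval v ++ tval x)).

Arguments brinkhuis_triple : clear implicits.

Definition l0 : letter := @Ordinal 3 0 isT.
Definition l1 : letter := @Ordinal 3 1 isT.
Definition l2 : letter := @Ordinal 3 2 isT.

Definition special_brinkhuis (n k : nat) (B : letter -> {set n.-tuple letter}) : Prop :=
  brinkhuis_triple n (fun _ => k) B /\
  B l1 = tau_set (B l0) /\ B l2 = tau_set (tau_set (B l0)) /\
  (forall w : n.-tuple letter, w \in B l0 -> rev_tuple w \in B l0).
Arguments special_brinkhuis : clear implicits.

(* Main.v *)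
Require Import Defs.
From mathcomp Require Import all_boot zify.
Set Implicit Arguments. Unset Strict Implicit.

Definition sqfb (T : eqType) (s : seq T) : bool :=
  ~~ has (fun i => has (fun l => if i + l + l <= size s then
                 take l (drop i s) == take l (drop (i + l) s) else false)
           (iota 1 (size s))) (iota 0 (size s)).

Lemma sqfP (T : eqType) (s : seq T) : reflect (square_free s) (sqfb s).
Proof.
apply: (iffP idP).
- move=> H [x [y [z [Hy Hs]]]]; move/negP: H; apply.
  have Hy0 : 0 < size y by rewrite lt0n size_eq0; apply/eqP.
  have Hsz : size s = size x + size y + size y + size z by rewrite Hs !size_cat; lia.
  apply/hasP; exists (size x); first by rewrite mem_iota; lia.
  apply/hasP; exists (size y); first by rewrite mem_iota; lia.
  apply/andP; split; first lia.
  rewrite Hs drop_size_cat // take_size_cat //.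
  by rewrite addnC -drop_drop drop_size_cat // drop_size_cat // take_size_cat.
- move=> H; apply/negP => /hasP [i Hi /hasP [l Hl /andP [Hle /eqP Heq]]].
  apply: H; exists (take i s), (take l (drop i s)), (drop (i + l + l) s).
  rewrite mem_iota in Hl.
  split.
    move=> H0; have := size_takel (_ : l <= size (drop i s)).
    rewrite H0 /=; rewrite size_drop => /(_ ltac:(lia)); lia.
  rewrite -{1}(cat_take_drop i s); congr (_ ++ _).
  rewrite -{1}(cat_take_drop l (drop i s)); congr (_ ++ _).
  rewrite drop_drop addnC Heq -{1}(cat_take_drop l (drop (i + l) s)) drop_drop.
  by rewrite (addnC l).
Qed.

Lemma sqf_factor (T : eqType) (a b c : seq T) :
  square_free (a ++ b ++ c) -> square_free b.
Proof.
move=> H [x [y [z [Hy Hb]]]]; apply: H.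
exists (a ++ x), y, (z ++ c); split => //.
by rewrite Hb -!catA.
Qed.

Definition Tf (i : nat) (c : letter) : letter :=
  match (i + val c) %% 3 with 0 => l0 | 1 => l1 | _ => l2 end.
Definition T (i : nat) (s : seq letter) : seq letter := map (Tf i) s.

Lemma val_iter_tau i (c : letter) : val (iter i tau c) = (i + val c) %% 3.
Proof.
elim: i => [|i IH] /=; first by rewrite add0n modn_small ?ltn_ord.
by rewrite /tau /= IH -addn1 modnDml addn1.
Qed.

Lemma iter_tauE i (c : letter) : iter i tau c = Tf i c.
Proof.
apply/val_inj; rewrite val_iter_tau /Tf.
have : (i + val c) %% 3 < 3 by rewrite ltn_mod.
by case: ((i + val c) %% 3) => [|[|[|k]]] //.
Qed.

Lemma T_iter i s : map (iter i tau) s = T i s.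
Proof. by apply: eq_map => c; exact: iter_tauE. Qed.

Definition letters : seq letter := [:: l0; l1; l2].
Lemma mem_letters (c : letter) : c \in letters.
Proof. by case: c => [[|[|[|m]]] Hm]. Qed.

Definition C (e f : seq letter * seq letter) : bool :=
  all (fun i : letter => all (fun j : letter => (i != j) ==> sqfb (T i e.2 ++ T j f.1)) letters) letters.

Fixpoint words (m : nat) : seq (seq letter) :=
  if m is m'.+1 then [seq c :: w | c <- letters, w <- words m'] else [:: [::]].

Lemma mem_words m s : size s = m -> s \in words m.
Proof.
elim: m s => [|m IH] [|c s] // Hs.
apply: (allpairs_f (fun c0 w => c0 :: w)); [exact: mem_letters | apply: IH; by case: Hs].
Qed.

Definition sqfwords m := filter (@sqfb _) (words m).

Definition eA : seq letter * seq letter := ([:: l0;l1;l2;l0;l2;l1], [:: l1;l2;l0;l2;l1;l0]).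
Definition eB : seq letter * seq letter := ([:: l0;l1;l2;l1;l0;l2], [:: l2;l0;l1;l2;l1;l0]).
Definition w5 : seq letter := [:: l0;l1;l2;l1;l0].

Definition check1 :=
  all (fun m => let W := sqfwords m in all (fun p => if take 2 (map val p) != [:: 0; 1] then true else
     all (fun s => if C (p, s) (p, s) then ((m < 6) && (p != s)) || ((p, s) == eA)
                   || ((p, s) == eB) || ((p == w5) && (s == w5)) else true) W)
     W) (iota 2 5).

Definition check2 := let W := sqfwords 6 in
  all (fun e => all (fun p => if C e (p, [::]) then all (fun s => if C (p, s) e then (p, s) == e else true)
     W else true) W) [:: eA; eB].

Definition check3 :=
  all (fun e => all (fun k => let w := e.1 ++ drop k e.2 in
     ~~ ((drop (6 - k) w == e.2) && sqfb (w ++ T 2 w ++ w))) (iota 0 7)) [:: eA; eB].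

Definition check4 := ~~ sqfb (w5 ++ T 2 w5 ++ w5).

Lemma check1_ok : check1. Proof. Time vm_compute. reflexivity. Qed.
Lemma check2_ok : check2. Proof. Time vm_compute. reflexivity. Qed.
Lemma check3_ok : check3. Proof. vm_compute. reflexivity. Qed.
Lemma check4_ok : check4. Proof. vm_compute. reflexivity. Qed.
Lemma sqf3_ok : all (fun i : letter => all (fun j : letter => (i != j) ==> sqfb [:: i; j; if j == l0 then l1 else l0]) letters) letters.
Proof. vm_compute. reflexivity. Qed.

Lemma mem_tau n (B : letter -> {set n.-tuple letter}) :
  B l1 = tau_set (B l0) -> B l2 = tau_set (tau_set (B l0)) ->
  forall u, u \in B l0 -> forall i : letter,
  exists2 u' : n.-tuple letter, u' \in B i & tval u' = T i (tval u).
Proof.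
move=> h1 h2 u hu [[|[|[|k]]] Hk] //.
- exists u; first by have -> : Ordinal Hk = l0 by apply/val_inj.
  by rewrite -T_iter map_id.
- exists (tau_word u); last by rewrite -T_iter.
  have -> : Ordinal Hk = l1 by apply/val_inj.
  by rewrite h1; apply: imset_f.
- exists (tau_word (tau_word u)); last by rewrite -T_iter /= -map_comp.
  have -> : Ordinal Hk = l2 by apply/val_inj.
  by rewrite h2; apply: imset_f; apply: imset_f.
Qed.

Definition prof n (u : n.-tuple letter) := (take 6 (tval u), drop (n - 6) (tval u)).

Lemma pairC n k (B : letter -> {set n.-tuple letter}) : special_brinkhuis n k B ->
  forall u v, u \in B l0 -> v \in B l0 -> C (prof u) (prof v).
Proof.
move=> [[_ [_ h3]] [h1 [h2 _]]] u v hu hv.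
apply/allP => i _; apply/allP => j _; apply/implyP => hij.
have [u' hu' eu] := mem_tau h1 h2 hu i.
have [v' hv' ev] := mem_tau h1 h2 hv j.
set kk := if j == l0 then l1 else l0.
have [x' hx' _] := mem_tau h1 h2 hu kk.
have h3' : square_free [:: i; j; kk].
  apply/sqfP; have := sqf3_ok.
  move/allP/(_ i (mem_letters i))/allP/(_ j (mem_letters j)).
  by rewrite hij.
have H := h3 _ _ _ h3' _ _ _ hu' hv' hx'.
rewrite eu ev -(cat_take_drop (n - 6) (tval u)) -(cat_take_drop 6 (tval v)) /T !map_cat -!catA in H.
rewrite [X in _ ++ X]catA in H.
by apply/sqfP; move: H => /sqf_factor.
Qed.

Lemma triple n k (B : letter -> {set n.-tuple letter}) : special_brinkhuis n k B ->
  forall u, u \in B l0 -> sqfb (tval u ++ T 2 (tval u) ++ tval u).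
Proof.
move=> [[_ [_ h3]] [h1 [h2 _]]] u hu.
have [u' hu' eu] := mem_tau h1 h2 hu l2.
have h3' : square_free [:: l0; l2; l0] by apply/sqfP; vm_compute.
apply/sqfP; have := h3 _ _ _ h3' _ _ _ hu hu' hu.
by rewrite eu.
Qed.

Lemma sqf_pre n k (B : letter -> {set n.-tuple letter}) : special_brinkhuis n k B ->
  forall u, u \in B l0 -> sqfb (prof u).1 /\ sqfb (prof u).2.
Proof.
move=> [[_ [hsq _]] _] u hu; have H := hsq _ _ hu; split; apply/sqfP.
- apply: (@sqf_factor _ [::] _ (drop 6 (tval u))).
  by rewrite /= cat_take_drop.
- apply: (@sqf_factor _ (take (n - 6) (tval u)) _ [::]).
  by rewrite cats0 cat_take_drop.
Qed.

Lemma pre_suf n (u : n.-tuple letter) e : prof u = e -> size e.1 = 6 -> size e.2 = 6 ->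
  prefix (map val e.1) (map val (tval u)) /\ suffix (map val e.2) (map val (tval u)).
Proof.
move=> <- /= h1 h2; rewrite prefixE suffixE !size_map h1 h2 size_tuple.
by rewrite map_take map_drop !eqxx.
Qed.

Lemma prof_e n k (B : letter -> {set n.-tuple letter}) : special_brinkhuis n k B ->
  forall w0, w0 \in B l0 -> forall e, e \in [:: eA; eB] -> prof w0 = e ->
  13 <= n /\ forall u, u \in B l0 -> prof u = e.
Proof.
move=> hS w0 hw0 e he hpe.
have hsz := size_tuple w0.
have he1 : size e.1 = 6 by move: he; rewrite !inE => /orP [] /eqP ->.
have he2 : size e.2 = 6 by move: he; rewrite !inE => /orP [] /eqP ->.
have hn6 : 6 <= n.
  by move: he1; rewrite -hpe /= size_take_min hsz; lia.
split.
  rewrite leqNgt; apply/negP => hn12.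
  move: check3_ok; rewrite /check3 => /allP H3; have H3' := H3 e he; cbv beta in H3'; move/allP: H3' => H4; move: (H4 (12 - n)).
  rewrite mem_iota => /(_ ltac:(lia)).
  have hw : e.1 ++ drop (12 - n) e.2 = tval w0.
    rewrite -hpe /= drop_drop.
    have -> : 12 - n + (n - 6) = 6 by lia.
    by rewrite cat_take_drop.
  rewrite hw.
  have -> : 6 - (12 - n) = n - 6 by lia.
  have -> : drop (n - 6) (tval w0) = e.2 by rewrite -hpe.
  by rewrite eqxx (triple hS hw0).
move=> u hu.
move: check2_ok; rewrite /check2 => /allP H3; have H3' := H3 e he; cbv beta in H3'; move/allP: H3' => H4; move: (H4 (take 6 (tval u))).
have [hp hs] := sqf_pre hS hu.
rewrite mem_filter hp mem_words; last by rewrite size_take_min size_tuple; lia.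
move=> /(_ isT).
have := pairC hS hw0 hu; rewrite hpe => hc1.
have -> : C e (take 6 (tval u), [::]) by exact: hc1.
move=> /allP H5; move: (H5 (drop (n - 6) (tval u))).
rewrite mem_filter hs mem_words; last by rewrite size_drop size_tuple; lia.
move=> /(_ isT).
have := pairC hS hu hw0; rewrite hpe => hc2.
by rewrite hc2 => /eqP.
Qed.

Theorem proposition1 (n k : nat) (B : letter -> {set n.-tuple letter}) :
  1 < n -> 1 <= k -> special_brinkhuis n k B ->
  (exists2 w : n.-tuple letter, w \in B l0 & prefix [:: 0; 1] (map val (tval w))) ->
  13 <= n /\
  (let P1 := forall w : n.-tuple letter, w \in B l0 ->
               prefix [:: 0; 1; 2; 0; 2; 1] (map val (tval w)) /\
               suffix [:: 1; 2; 0; 2; 1; 0] (map val (tval w)) in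
   let P2 := forall w : n.-tuple letter, w \in B l0 ->
               prefix [:: 0; 1; 2; 1; 0; 2] (map val (tval w)) /\
               suffix [:: 2; 0; 1; 2; 1; 0] (map val (tval w)) in
   (P1 /\ ~ P2) \/ (~ P1 /\ P2)).
Proof.
move=> hn hk hS [w0 hw0 hpre].
have hsz := size_tuple w0.
set m := minn 6 n.
have [hp hs] := sqf_pre hS hw0.
have hpm : take 2 (map val (prof w0).1) = [:: 0; 1].
  rewrite /= map_take take_takel //; move: hpre; rewrite prefixE => /eqP; exact.
have hC := pairC hS hw0 hw0.
move: check1_ok; rewrite /check1 => /allP /(_ m).
rewrite mem_iota => /(_ ltac:(lia)).
move=> H1; cbv zeta in H1; move/allP: H1 => /(_ (prof w0).1).
rewrite mem_filter hp mem_words; last by rewrite /= size_take_min hsz.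
move=> /(_ isT); rewrite hpm eqxx /=.
move=> /allP /(_ (prof w0).2).
rewrite mem_filter hs mem_words; last by rewrite /= size_drop hsz; lia.
move=> /(_ isT).
have e0 : (take 6 (tval w0), (prof w0).2) = prof w0 by []. rewrite e0 hC.
have final : forall e, e \in [:: eA; eB] -> prof w0 = e -> 13 <= n /\
  (let P1 := forall w : n.-tuple letter, w \in B l0 ->
               prefix [:: 0; 1; 2; 0; 2; 1] (map val (tval w)) /\
               suffix [:: 1; 2; 0; 2; 1; 0] (map val (tval w)) in
   let P2 := forall w : n.-tuple letter, w \in B l0 ->
               prefix [:: 0; 1; 2; 1; 0; 2] (map val (tval w)) /\
               suffix [:: 2; 0; 1; 2; 1; 0] (map val (tval w)) in
   (P1 /\ ~ P2) \/ (~ P1 /\ P2)).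
  move=> e he hpe.
  have [h13 hall] := prof_e hS hw0 he hpe.
  split => //.
  move: he; rewrite !inE => /orP [] /eqP ee; rewrite ee in hall hpe.
  - left; split.
      by move=> w hw; exact: (pre_suf (hall w hw) erefl erefl).
    move=> H2; have [H _] := H2 w0 hw0; have [H' _] := pre_suf hpe erefl erefl.
    by move: H H'; rewrite !prefixE /= => /eqP ->.
  - right; split.
      move=> H2; have [H _] := H2 w0 hw0; have [H' _] := pre_suf hpe erefl erefl.
      by move: H H'; rewrite !prefixE /= => /eqP ->.
    by move=> w hw; exact: (pre_suf (hall w hw) erefl erefl).
case/orP => [/orP [/orP [/andP [hm6 hneq]| /eqP hA] | /eqP hB] | /andP [/eqP h5 _]].
- exfalso; move: hneq; rewrite /= take_oversize ?hsz; last by lia.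
  have -> : n - 6 = 0 by lia.
  by rewrite drop0 eqxx.
- exact: (final eA).
- exact: (final eB).
- exfalso.
  have hn5 : n = 5.
    by move: (congr1 size h5); rewrite /= size_take_min hsz /=; lia.
  move: (triple hS hw0); rewrite /= take_oversize ?hsz in h5; last by lia.
  rewrite h5; move: check4_ok; rewrite /check4 => /negP; exact.
Qed.
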